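(* Each of the axioms CORE, JR, PJR, EJR, PJR+, EJR+ and FJR (viewed as a mapping from approval profiles to the set of $k$-committees satisfying it) is a group-satisfaction-threshold (GST) axiom; that is, for each such axiom $X$ there exists a function $\tau:\mathcal A_k\times 2^{\mathcal E}\to\{0,1,\dots,k+1\}$ such that for every profile $P$ and every $W\in\mathcal A_k$: $W\in X(P)$ if and only if for all $G\subseteq\mathcal E$, $\left(\vec w_G-\frac{\tau(W,G)}{k}\vec 1\right)\cdot\mathrm{Hist}(P)<0$.
   Context: $\mathcal A=[m]$, $1\le k\le m$, $\mathcal A_k$ is the set of $k$-subsets of $\mathcal A$, $\mathcal E=2^{\mathcal A}$. A profile is $P=(A_1,\dots,A_n)\in\mathcal E^n$ ($n\ge1$ voters); $\mathrm{Hist}(P)\in\mathbb Z_{\ge0}^{\mathcal E}$ counts occurrences of each ballot. For $G\subseteq\mathcal E$, $\vec w_G\in\{0,1\}^{\mathcal E}$ is the indicator vector of $G$, and $\vec 1$ is the all-ones vector. A ''group'' is a set $N'\subseteq[n]$ of voters. For $\ell\ge1$, $N'$ is $\ell$-cohesive if $|N'|\ge\ell n/k$ and $|\bigcap_{j\in N'}A_j|\ge\ell$. - CORE: $W\in\mathcal A_k$ is in CORE$(P)$ iff for every nonempty $N'\subseteq[n]$ and every $W'\subseteq\mathcal A$ with $|W'|/k\le|N'|/n$ there is $j\in N'$ with $|A_j\cap W'|\le|A_j\cap W|$. - JR: for every 1-cohesive $N'$ there is $j\in N'$ with $|A_j\cap W|\ge1$. - EJR: for every $\ell\ge1$ and every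 $\ell$-cohesive $N'$ there is $j\in N'$ with $|A_j\cap W|\ge\ell$. - PJR: for every $\ell\ge1$ and every $\ell$-cohesive $N'$, $|W\cap\bigcup_{j\in N'}A_j|\ge\ell$. - EJR+: there are no $a\in\mathcal A\setminus W$, $\ell\ge1$ and $N'$ with $|N'|\ge\ell n/k$ such that every $j\in N'$ has $a\in A_j$ and $|A_j\cap W|<\ell$. - PJR+: there are no $a\in\mathcal A\setminus W$, $\ell\ge1$ and $N'$ with $|N'|\ge\ell n/k$ such that $a\in A_j$ for all $j\in N'$ and $|W\cap\bigcup_{j\in N'}A_j|<\ell$. - FJR: for every $\beta\ge1$, $T\subseteq\mathcal A$ and every $N'$ with $|N'|\ge|T|n/k$ and $|A_j\cap T|\ge\beta$ for all $j\in N'$, there is $j\in N'$ with $|A_j\cap W|\ge\beta$. *)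

(* Defs.v *)
From mathcomp Require Import all_boot all_order all_algebra.
Set Implicit Arguments. Unset Strict Implicit. Unset Printing Implicit Defensive.
Import Order.TTheory GRing.Theory Num.Theory.

(* Candidates: 'I_m.  Ballots (elements of E = 2^A): {set 'I_m}.
   A profile with n voters: P : 'I_n -> {set 'I_m}  (P j = A_j).
   Groups: N' : {set 'I_n}.  Quotients like l*n/k are taken in rat. *)

Section Properties.
Variables (m k n : nat) (P : 'I_n -> {set 'I_m}) (W : {set 'I_m}).
Local Open Scope ring_scope.

Definition large (l : nat) (N' : {set 'I_n}) : Prop :=
  (#|N'|%:R : rat) >= l%:R * n%:R / k%:R.

Definition cohesive (l : nat) (N' : {set 'I_n}) : Prop :=
  large l N' /\ (l <= #|\bigcap_(j in N') P j|)%N.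

Definition CORE : Prop :=
  forall (N' : {set 'I_n}) (W' : {set 'I_m}), N' != set0 ->
    (#|W'|%:R / k%:R : rat) <= #|N'|%:R / n%:R ->
    exists2 j, j \in N' & (#|P j :&: W'| <= #|P j :&: W|)%N.

Definition JR : Prop :=
  forall N' : {set 'I_n}, cohesive 1 N' ->
    exists2 j, j \in N' & (1 <= #|P j :&: W|)%N.

Definition EJR : Prop :=
  forall (l : nat) (N' : {set 'I_n}), (1 <= l)%N -> cohesive l N' ->
    exists2 j, j \in N' & (l <= #|P j :&: W|)%N.

Definition PJR : Prop :=
  forall (l : nat) (N' : {set 'I_n}), (1 <= l)%N -> cohesive l N' ->
    (l <= #|W :&: \bigcup_(j in N') P j|)%N.

Definition EJRplus : Prop :=
  ~ exists (a : 'I_m) (l : nat) (N' : {set 'I_n}),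
      [/\ a \notin W, (1 <= l)%N, large l N' &
          forall j, j \in N' -> a \in P j /\ (#|P j :&: W| < l)%N].

Definition PJRplus : Prop :=
  ~ exists (a : 'I_m) (l : nat) (N' : {set 'I_n}),
      [/\ a \notin W, (1 <= l)%N, large l N',
          (forall j, j \in N' -> a \in P j) &
          (#|W :&: \bigcup_(j in N') P j| < l)%N].

Definition FJR : Prop :=
  forall (beta : nat) (T : {set 'I_m}) (N' : {set 'I_n}),
    (1 <= beta)%N -> N' != set0 -> large #|T| N' ->
    (forall j, j \in N' -> (beta <= #|P j :&: T|)%N) ->
    exists2 j, j \in N' & (beta <= #|P j :&: W|)%N.

End Properties.

Inductive axiom_name := AxCORE | AxJR | AxPJR | AxEJR | AxPJRplus | AxEJRplus | AxFJR.

Definition satisfies (X : axiom_name) (m k n : nat)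
  (P : 'I_n -> {set 'I_m}) (W : {set 'I_m}) : Prop :=
  match X with
  | AxCORE => CORE k P W
  | AxJR => JR k P W
  | AxPJR => PJR k P W
  | AxEJR => EJR k P W
  | AxPJRplus => PJRplus k P W
  | AxEJRplus => EJRplus k P W
  | AxFJR => FJR k P W
  end.

Definition hist (m n : nat) (P : 'I_n -> {set 'I_m}) (B : {set 'I_m}) : nat :=
  #|[set j | P j == B]|.

(* (w_G - t/k * 1) . Hist(P) *)
Definition gst_value (m k n : nat) (P : 'I_n -> {set 'I_m})
  (G : {set {set 'I_m}}) (t : nat) : rat :=
  (\sum_(B : {set 'I_m})
     (((B \in G)%:R - t%:R / k%:R) * (hist P B)%:R))%R.

(* Main.v *)
Require Import Defs.
From mathcomp Require Import all_boot all_order all_algebra.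
From Stdlib Require Import Classical.
Set Implicit Arguments. Unset Strict Implicit. Unset Printing Implicit Defensive.
Import Order.TTheory GRing.Theory Num.Theory.
Section Helpers.
Local Open Scope ring_scope.

Lemma sum_hist (m n : nat) (P : 'I_n -> {set 'I_m}) (F : {set 'I_m} -> rat) :
  \sum_B F B * (hist P B)%:R = \sum_j F (P j).
Proof.
rewrite (partition_big P xpredT) //=; apply: eq_bigr => B _.
rewrite /hist (eq_bigr (fun=> F B)); last by move=> j /eqP ->.
rewrite sumr_const mulr_natr; congr (_ *+ _).
by apply: eq_card => j; rewrite inE.
Qed.

Lemma gstE (m k n : nat) (P : 'I_n -> {set 'I_m}) G t :
  gst_value k P G t = #|[set j | P j \in G]|%:R - t%:R * n%:R / k%:R.
Proof.
rewrite /gst_value sum_hist sumrB; congr (_ - _).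
  rewrite -natr_sum; congr (_%:R); rewrite -sum1_card [RHS]big_mkcond /=.
  by apply: eq_bigr => j _; rewrite inE; case: (_ \in G).
by rewrite sumr_const cardT size_enum_ord -[_ *+ n]mulr_natr mulrAC.
Qed.


Lemma large_mono (k n l l' : nat) (N1 N2 : {set 'I_n}) :
  (l' <= l)%N -> large k l N1 -> (#|N1| <= #|N2|)%N -> large k l' N2.
Proof.
rewrite /large => hl h hc.
apply: le_trans (_ : #|N1|%:R <= #|N2|%:R) ; last by rewrite ler_nat.
apply: le_trans h.
apply: ler_wpM2r; first by rewrite invr_ge0 ler0n.
by apply: ler_wpM2r; rewrite ?ler0n ?ler_nat.
Qed.

Lemma large_le (k n l : nat) (N1 : {set 'I_n}) :
  (0 < k)%N -> (0 < n)%N -> large k l N1 -> (l <= k)%N.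
Proof.
rewrite /large => hk hn h.
have h2 : (l%:R * n%:R / k%:R : rat) <= n%:R.
  apply: le_trans h _; rewrite ler_nat.
  by apply: leq_trans (max_card _) _; rewrite card_ord.
move: h2; rewrite ler_pdivrMr ?ltr0n // -!natrM ler_nat mulnC leq_pmul2l //.
Qed.

Lemma large_ne0 (k n l : nat) (N1 : {set 'I_n}) :
  (0 < k)%N -> (0 < n)%N -> (0 < l)%N -> large k l N1 -> N1 != set0.
Proof.
rewrite /large => hk hn hl h; apply/negP => /eqP e; move: h.
rewrite e cards0 leNgt => /negP; apply.
by rewrite divr_gt0 ?mulr_gt0 ?ltr0n.
Qed.

Lemma generic (m k : nat) (hk : (0 < k)%N) (D : finType) (c : D -> nat)
  (Q : {set 'I_m} -> D -> {set 'I_m} -> bool)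
  (hc : forall W d B, Q W d B -> (0 < c d)%N) :
  exists tau : {set 'I_m} -> {set {set 'I_m}} -> 'I_k.+2,
    forall n (P : 'I_n -> {set 'I_m}) W, (0 < n)%N ->
    ((~ exists d (N' : {set 'I_n}), [/\ N' != set0, large k (c d) N' &
          forall j, j \in N' -> Q W d (P j)])
      <-> forall G, gst_value k P G (tau W G) < 0).
Proof.
pose p W G := fun t => (t == k.+1) ||
  [exists d, (c d == t) && (G != set0) && [forall B in G, Q W d B]].
have exP W G : exists t, p W G t by exists k.+1; rewrite /p eqxx.
pose tv W G := ex_minn (exP W G).
have tvP W G : p W G (tv W G) /\ forall t, p W G t -> (tv W G <= t)%N.
  by rewrite /tv; case: ex_minnP.
have tvle W G : (tv W G < k.+2)%N by apply: (tvP W G).2; rewrite /p eqxx.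
exists (fun W G => inord (tv W G)) => n P W hn.
split.
- move=> nov G; rewrite gstE inordK // subr_lt0 ltNge; apply/negP => hl.
  case: (tvP W G) => /orP [/eqP e | /existsP [d /andP[/andP[/eqP cd Gne] /forallP hQ]]] _.
    by move: (large_le hk hn hl); rewrite e ltnn.
  apply: nov; exists d, [set j | P j \in G]; split.
  + case/set0Pn: Gne => B hB.
    apply: (large_ne0 hk hn (hc W d B (implyP (hQ B) hB))).
    by rewrite /large cd.
  + by rewrite /large cd.
  + by move=> j; rewrite inE => hj; exact: (implyP (hQ _)) hj.
- move=> hG [d [N' [hne hl hQ]]].
  have := hG (P @: N'); rewrite gstE inordK // subr_lt0 ltNge => /negP; apply.
  have htv : (tv W (P @: N') <= c d)%N.
    apply: (tvP _ _).2; apply/orP; right; apply/existsP; exists d.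
    rewrite eqxx /= imset_eq0 hne /=; apply/forallP => B; apply/implyP.
    by case/imsetP => j hj ->; exact: hQ.
  apply: (large_mono htv hl); apply: subset_leq_card; apply/subsetP => j hj.
  by rewrite inE imset_f.
Qed.



Lemma subset_card (T : finType) (A : {set T}) l :
  (l <= #|A|)%N -> exists2 S : {set T}, S \subset A & #|S| = l.
Proof.
elim: l => [|l IH] hl; first by exists set0; rewrite ?sub0set ?cards0.
have [S hSA hS] := IH (ltnW hl).
have : A :\: S != set0.
  apply/negP => /eqP e; move: hl; rewrite -hS.
  have : A \subset S by rewrite -setD_eq0 e.
  by move/subset_leq_card; rewrite leqNgt => /negP.
case/set0Pn => x; rewrite inE => /andP [hxS hxA].
exists (x |: S); first by rewrite subUset sub1set hxA hSA.
by rewrite cardsU1 hxS hS.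
Qed.

Lemma core_equiv (m k n : nat) (P : 'I_n -> {set 'I_m}) W :
  (0 < k)%N -> (0 < n)%N ->
  CORE k P W <-> ~ exists (d : {set 'I_m}) (N' : {set 'I_n}),
    [/\ N' != set0, large k #|d| N' &
        forall j, j \in N' -> (#|P j :&: W| < #|P j :&: d|)%N].
Proof.
move=> hk hn.
have cond (a b : nat) : ((a%:R / k%:R : rat) <= b%:R / n%:R) <-> (a%:R * n%:R / k%:R <= (b%:R : rat)).
  by rewrite ler_pdivlMr ?ltr0n // mulrAC.
split.
- move=> hC [W' [N' [hne hl hQ]]].
  have [j hj hle] := hC N' W' hne (proj2 (cond _ _) hl).
  by move: (hQ j hj); rewrite ltnNge hle.
- move=> nov N' W' hne hle.
  case: (classic (exists2 j, j \in N' & (#|P j :&: W'| <= #|P j :&: W|)%N)) => // hno.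
  exfalso; apply: nov; exists W', N'; split => //; first exact/cond.
  move=> j hj; rewrite ltnNge; apply/negP => h; apply: hno; by exists j.
Qed.

Lemma jr_equiv (m k n : nat) (P : 'I_n -> {set 'I_m}) W :
  (0 < k)%N -> (0 < n)%N ->
  JR k P W <-> ~ exists (a : 'I_m) (N' : {set 'I_n}),
    [/\ N' != set0, large k 1 N' &
        forall j, j \in N' -> (a \in P j) && (#|P j :&: W| == 0%N)].
Proof.
move=> hk hn; split.
- move=> hJ [a [N' [hne hl hQ]]].
  have [|j hj] := hJ N'.
    split => //; rewrite card_gt0; apply/set0Pn; exists a.
    by apply/bigcapP => j hj; case/andP: (hQ j hj).
  by case/andP: (hQ j hj) => _ /eqP ->.
- move=> nov N' [hl hcap].
  have /set0Pn [a /bigcapP ha] : \bigcap_(j in N') P j != set0 by rewrite -card_gt0.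
  case: (classic (exists2 j, j \in N' & (1 <= #|P j :&: W|)%N)) => // hno.
  exfalso; apply: nov; exists a, N'; split => //.
    exact: (large_ne0 hk hn _ hl).
  move=> j hj; rewrite ha //=; case: (posnP #|P j :&: W|) => // h.
  by exfalso; apply: hno; exists j.
Qed.


Lemma ejr_equiv (m k n : nat) (P : 'I_n -> {set 'I_m}) W :
  (0 < k)%N -> (0 < n)%N ->
  EJR k P W <-> ~ exists (S : {set 'I_m}) (N' : {set 'I_n}),
    [/\ N' != set0, large k #|S| N' &
        forall j, j \in N' -> (S \subset P j) && (#|P j :&: W| < #|S|)%N].
Proof.
move=> hk hn; split.
- move=> hE [S [N' [hne hl hQ]]].
  case/set0Pn: (hne) => j0 hj0.
  have hS1 : (1 <= #|S|)%N by case/andP: (hQ j0 hj0) => _ h; apply: leq_ltn_trans h.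
  have [|j hj] := hE #|S| N' hS1.
    split => //; apply: subset_leq_card; apply/bigcapsP => j hj.
    by case/andP: (hQ j hj).
  by case/andP: (hQ j hj) => _; rewrite ltnNge => /negP.
- move=> nov l N' hl1 [hl hcap].
  have [S hS hSl] := subset_card hcap.
  case: (classic (exists2 j, j \in N' & (l <= #|P j :&: W|)%N)) => // hno.
  exfalso; apply: nov; exists S, N'; split; rewrite ?hSl //.
    exact: (large_ne0 hk hn hl1 hl).
  move=> j hj; rewrite (subset_trans hS (bigcap_inf _ hj)) /=.
  rewrite ltnNge; apply/negP => h; apply: hno; by exists j.
Qed.

Lemma pjr_equiv (m k n : nat) (P : 'I_n -> {set 'I_m}) W :
  (0 < k)%N -> (0 < n)%N ->
  PJR k P W <-> ~ exists (d : {set 'I_m} * {set 'I_m}) (N' : {set 'I_n}),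
    [/\ N' != set0, large k #|d.1| N' &
        forall j, j \in N' -> [&& d.1 \subset P j, (P j :&: W) \subset d.2 & (#|d.2| < #|d.1|)%N]].
Proof.
move=> hk hn; split.
- move=> hP [[S U] [N' [hne hl hQ]]] /=; simpl in hl, hQ.
  case/set0Pn: (hne) => j0 hj0.
  have hS1 : (1 <= #|S|)%N by case/and3P: (hQ j0 hj0) => _ _ h; apply: leq_ltn_trans h.
  have hcoh : cohesive k P #|S| N'.
    split => //; apply: subset_leq_card; apply/bigcapsP => j hj.
    by case/and3P: (hQ j hj).
  have h1 := hP #|S| N' hS1 hcoh.
  have h2 : (#|W :&: \bigcup_(j in N') P j| <= #|U|)%N.
    apply: subset_leq_card; apply/subsetP => x /setIP [xW /bigcupP [j hj xj]].
    by case/and3P: (hQ j hj) => _ /subsetP h _; apply: h; rewrite inE xj xW.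
  have h3 : (#|U| < #|S|)%N by case/and3P: (hQ j0 hj0).
  by move: (leq_trans h1 h2); rewrite leqNgt h3.
- move=> nov l N' hl1 [hl hcap].
  have [S hS hSl] := subset_card hcap.
  case: (leqP l #|W :&: \bigcup_(j in N') P j|) => // hlt.
  exfalso; apply: nov; exists (S, W :&: \bigcup_(j in N') P j), N'; split; rewrite /= ?hSl //.
    exact: (large_ne0 hk hn hl1 hl).
  move=> j hj; rewrite (subset_trans hS (bigcap_inf _ hj)) hlt /= andbT.
  apply/subsetP => x /setIP [xj xW]; rewrite inE xW /=.
  by apply/bigcupP; exists j.
Qed.




Lemma ejrp_equiv (m k n : nat) (P : 'I_n -> {set 'I_m}) W :
  (0 < k)%N -> (0 < n)%N ->
  EJRplus k P W <-> ~ exists (d : 'I_m * 'I_k.+2) (N' : {set 'I_n}),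
    [/\ N' != set0, large k d.2 N' &
        forall j, j \in N' -> [&& d.1 \notin W, d.1 \in P j, (#|P j :&: W| < d.2)%N & (0 < d.2)%N]].
Proof.
move=> hk hn; rewrite /EJRplus; split => nov h; apply: nov.
- case: h => [[a l] [N' [hne hl hQ]]] /=; simpl in hl, hQ.
  case/set0Pn: (hne) => j0 hj0.
  case/and4P: (hQ j0 hj0) => ha _ _ hl0.
  exists a, l, N'; split => // j hj.
  by case/and4P: (hQ j hj).
- case: h => [a [l [N' [ha hl1 hl hall]]]].
  have hlk : (l < k.+2)%N by apply: leq_trans (large_le hk hn hl) _.
  exists (a, inord l), N'; rewrite /= inordK //; split => //.
    exact: (large_ne0 hk hn hl1 hl).
  by move=> j hj; case: (hall j hj) => -> ->; rewrite ha hl1.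
Qed.

Lemma pjrp_equiv (m k n : nat) (P : 'I_n -> {set 'I_m}) W :
  (0 < k)%N -> (0 < n)%N ->
  PJRplus k P W <-> ~ exists (d : 'I_m * 'I_k.+2 * {set 'I_m}) (N' : {set 'I_n}),
    [/\ N' != set0, large k d.1.2 N' &
        forall j, j \in N' -> [&& d.1.1 \notin W, d.1.1 \in P j, (P j :&: W) \subset d.2,
                                  (#|d.2| < d.1.2)%N & (0 < d.1.2)%N]].
Proof.
move=> hk hn; rewrite /PJRplus; split => nov h; apply: nov.
- case: h => [[[a l] U] [N' [hne hl hQ]]] /=; simpl in hl, hQ.
  case/set0Pn: (hne) => j0 hj0.
  case/and5P: (hQ j0 hj0) => ha _ _ hU hl0.
  exists a, l, N'; split => //.
    by move=> j hj; case/and5P: (hQ j hj).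
  apply: leq_ltn_trans hU.
  apply: subset_leq_card; apply/subsetP => x /setIP [xW /bigcupP [j hj xj]].
  by case/and5P: (hQ j hj) => _ _ /subsetP h _ _; apply: h; rewrite inE xj xW.
- case: h => [a [l [N' [ha hl1 hl hall hcnt]]]].
  have hlk : (l < k.+2)%N by apply: leq_trans (large_le hk hn hl) _.
  exists (a, inord l, W :&: \bigcup_(j in N') P j), N'; rewrite /= inordK //; split => //.
    exact: (large_ne0 hk hn hl1 hl).
  move=> j hj; rewrite ha hall // hcnt hl1 /= andbT.
  apply/subsetP => x /setIP [xj xW]; rewrite inE xW /=.
  by apply/bigcupP; exists j.
Qed.

Lemma fjr_equiv (m k n : nat) (P : 'I_n -> {set 'I_m}) W :
  (0 < k)%N -> (0 < n)%N ->
  FJR k P W <-> ~ exists (d : 'I_m.+1 * {set 'I_m}) (N' : {set 'I_n}),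
    [/\ N' != set0, large k #|d.2| N' &
        forall j, j \in N' -> [&& (0 < d.1)%N, (d.1 <= #|P j :&: d.2|)%N & (#|P j :&: W| < d.1)%N]].
Proof.
move=> hk hn; split.
- move=> hF [[b T] [N' [hne hl hQ]]] /=; simpl in hl, hQ.
  case/set0Pn: (hne) => j0 hj0.
  have hb : (1 <= b)%N by case/and3P: (hQ j0 hj0).
  have [|j hj] := hF b T N' hb hne hl.
    by move=> j hj; case/and3P: (hQ j hj).
  by case/and3P: (hQ j hj) => _ _; rewrite ltnNge => /negP.
- move=> nov beta T N' hb hne hl hall.
  case: (classic (exists2 j, j \in N' & (beta <= #|P j :&: W|)%N)) => // hno.
  case/set0Pn: (hne) => j0 hj0.
  have hbm : (beta < m.+1)%N.
    apply: leq_trans (hall j0 hj0) _.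
    by apply: leq_trans (max_card _) _; rewrite card_ord.
  exfalso; apply: nov; exists (inord beta, T), N'; rewrite /= inordK //; split => //.
  move=> j hj; rewrite hb hall //=.
  rewrite ltnNge; apply/negP => h; apply: hno; by exists j.
Qed.

End Helpers.

Theorem theorem3 (m k : nat) (hk1 : 1 <= k) (hkm : k <= m) (X : axiom_name) :
  exists tau : {set 'I_m} -> {set {set 'I_m}} -> 'I_k.+2,
    forall (n : nat) (P : 'I_n -> {set 'I_m}) (W : {set 'I_m}),
      0 < n -> #|W| = k ->
      (satisfies X k P W <->
       forall G : {set {set 'I_m}}, (gst_value k P G (tau W G) < 0)%R).
Proof.
have hk : (0 < k)%N := hk1.
case: X.
- have [|tau Ht] := generic hk (c := fun S : {set 'I_m} => #|S|)
      (Q := fun W S B => (#|B :&: W| < #|B :&: S|)%N).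
    move=> W d B h; apply: leq_trans (leq_ltn_trans (leq0n _) h) _.
    exact/subset_leq_card/subsetIr.
  exists tau => n P W hn _; apply: iff_trans (Ht n P W hn); exact: core_equiv.
- have [|tau Ht] := generic hk (c := fun _ : 'I_m => 1%N)
      (Q := fun W a B => (a \in B) && (#|B :&: W| == 0%N)) => //.
  exists tau => n P W hn _; apply: iff_trans (Ht n P W hn); exact: jr_equiv.
- have [|tau Ht] := generic hk (c := fun d : {set 'I_m} * {set 'I_m} => #|d.1|)
      (Q := fun W d B => [&& d.1 \subset B, (B :&: W) \subset d.2 & (#|d.2| < #|d.1|)%N]).
    by move=> W d B /and3P [_ _ h]; apply: leq_ltn_trans h.
  exists tau => n P W hn _; apply: iff_trans (Ht n P W hn); exact: pjr_equiv.
- have [|tau Ht] := generic hk (c := fun S : {set 'I_m} => #|S|)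
      (Q := fun W S B => (S \subset B) && (#|B :&: W| < #|S|)%N).
    by move=> W d B /andP [_ h]; apply: leq_ltn_trans h.
  exists tau => n P W hn _; apply: iff_trans (Ht n P W hn); exact: ejr_equiv.
- have [|tau Ht] := generic hk (c := fun d : 'I_m * 'I_k.+2 * {set 'I_m} => (d.1.2 : nat))
      (Q := fun W d B => [&& d.1.1 \notin W, d.1.1 \in B, (B :&: W) \subset d.2,
                                  (#|d.2| < d.1.2)%N & (0 < d.1.2)%N]).
    by move=> W d B /and5P [].
  exists tau => n P W hn _; apply: iff_trans (Ht n P W hn); exact: pjrp_equiv.
- have [|tau Ht] := generic hk (c := fun d : 'I_m * 'I_k.+2 => (d.2 : nat))
      (Q := fun W d B => [&& d.1 \notin W, d.1 \in B, (#|B :&: W| < d.2)%N & (0 < d.2)%N]).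
    by move=> W d B /and4P [].
  exists tau => n P W hn _; apply: iff_trans (Ht n P W hn); exact: ejrp_equiv.
- have [|tau Ht] := generic hk (c := fun d : 'I_m.+1 * {set 'I_m} => #|d.2|)
      (Q := fun W d B => [&& (0 < d.1)%N, (d.1 <= #|B :&: d.2|)%N & (#|B :&: W| < d.1)%N]).
    move=> W d B /and3P [h1 h2 _]; apply: leq_trans h1 (leq_trans h2 _).
    exact/subset_leq_card/subsetIr.
  exists tau => n P W hn _; apply: iff_trans (Ht n P W hn); exact: fjr_equiv.
Qed.
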